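(* Consider a time-invariant UMCO channel $\mathbf P(b_i|b_{i-1},a_i)$ on finite alphabets $\mathbb A,\mathbb B$. Let $\widetilde V_0\equiv0$ and, for $t\ge1$, $$\widetilde V_t(b_{-1})=\sup_{\pi(\cdot|b_{-1})}\sum_{a_0}\Big\{\sum_{b_0}\log\frac{\mathbf P(b_0|b_{-1},a_0)}{\mathbf P^{\pi}(b_0|b_{-1})}\mathbf P(b_0|b_{-1},a_0)+\sum_{b_0}\widetilde V_{t-1}(b_0)\mathbf P(b_0|b_{-1},a_0)\Big\}\pi(a_0|b_{-1}).$$ Assume there exist $V:\mathbb B\to\mathbb R$ and $J^*\in\mathbb R$ with $\lim_{t\to\infty}(\widetilde V_t(b_{-1})-tJ^* )=V(b_{-1})$ for all $b_{-1}\in\mathbb B$, and that there exist $\{\pi^{\infty,*}(\cdot|b_{-1})\}$ and the pair $(V,J^* )$ solving $$J^*+V(b_{-1})=\sup_{\pi(\cdot|b_{-1})}\sum_{a_0}\Big\{\sum_{b_0}\log\frac{\mathbf P(b_0|b_{-1},a_0)}{\mathbf P^{\pi}(b_0|b_{-1})}\mathbf P(b_0|b_{-1},a_0)+\sum_{b_0}V(b_0)\mathbf P(b_0|b_{-1},a_0)\Big\}\pi(a_0|b_{-1}).$$ Then for every initial distribution $\mu$ of $B_{-1}$, $$J^*=C^{FB,UMCO}_{A^\infty\to B^\infty}=\liminf_{n\to\infty}\frac1n\sup_{\pi^\infty}\mathbf E^{\pi^\infty}_\mu\Big[\sum_{i=0}^{n-1}\log\frac{\mathbf P(B_i|B_{i-1},A_i)}{\mathbf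 P^{\pi^\infty}(B_i|B_{i-1})}\Big],$$ and in particular this value does not depend on $\mu$.
   Context: Time-invariant UMCO channel: channel $\mathbf P(b_i|b_{i-1},a_i)$ on finite alphabets $\mathbb A,\mathbb B$, with the initial state $B_{-1}\sim\mu$. Input distributions $\pi^\infty(a_i|b_{i-1})$ (time-invariant), output transitions $\mathbf P^{\pi}(b_i|b_{i-1})=\sum_a\mathbf P(b_i|b_{i-1},a)\pi(a|b_{i-1})$. Logarithms base 2. *)

(* Defs.v *)
From Stdlib Require Import Reals ClassicalEpsilon.
From mathcomp Require Import all_boot.

Set Implicit Arguments.
Unset Strict Implicit.
Unset Printing Implicit Defensive.

Local Open Scope R_scope.

Notation "\rsum_ ( i : T ) F" := (\big[Rplus/R0]_(i : T) F)
  (at level 41, F at level 41, i, T at level 50) : R_scope.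
Notation "\rsum_ ( i < n ) F" := (\big[Rplus/R0]_(i < n) F)
  (at level 41, F at level 41, i, n at level 50) : R_scope.
Notation "\rprod_ ( i < n ) F" := (\big[Rmult/R1]_(i < n) F)
  (at level 36, F at level 36, i, n at level 50) : R_scope.

(* logarithm base 2 (Stdlib's ln is total, ln x = 0 for x <= 0) *)
Definition log2 (x : R) : R := ln x / ln 2.

Definition Rsup (E : R -> Prop) : R :=
  epsilon (inhabits R0) (fun l => is_lub E l).
Definition Rinf (E : R -> Prop) : R := - Rsup (fun x => E (- x)).
Definition Rliminf (u : nat -> R) : R :=
  Rsup (fun y => exists n : nat, y = Rinf (fun x => exists k : nat, (n <= k)%nat /\ x = u k)).

Definition is_distr (T : finType) (p : T -> R) : Prop :=
  (forall x, 0 <= p x) /\ \rsum_(x : T) p x = 1.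

(* channel P b b' a = P(b_i = b | b_{i-1} = b', a_i = a) *)
Definition is_channel (A B : finType) (P : B -> B -> A -> R) : Prop :=
  forall b' a, is_distr (fun b => P b b' a).

(* time-invariant input distribution pi b' a = pi(a_i = a | b_{i-1} = b') *)
Definition is_policy (A B : finType) (pi : B -> A -> R) : Prop :=
  forall b', is_distr (pi b').

(* P^pi(b | b') for a distribution p = pi(.|b') on A *)
Definition Pout (A B : finType) (P : B -> B -> A -> R) (p : A -> R) (b b' : B) : R :=
  \rsum_(a : A) P b b' a * p a.

(* the one-step operator inside the sup of the dynamic programming equations:
   sum_{a0} { sum_{b0} log(P(b0|b',a0)/P^p(b0|b')) P(b0|b',a0)
              + sum_{b0} W(b0) P(b0|b',a0) } p(a0) *)
Definition Fop (A B : finType) (P : B -> B -> A -> R) (W : B -> R)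
    (b' : B) (p : A -> R) : R :=
  \rsum_(a0 : A)
    ((\rsum_(b0 : B) log2 (P b0 b' a0 / Pout P p b0 b') * P b0 b' a0)
     + (\rsum_(b0 : B) W b0 * P b0 b' a0)) * p a0.

Definition supF (A B : finType) (P : B -> B -> A -> R) (W : B -> R) (b' : B) : R :=
  Rsup (fun x => exists p : A -> R, is_distr p /\ x = Fop P W b' p).

Fixpoint Vtilde (A B : finType) (P : B -> B -> A -> R) (t : nat) : B -> R :=
  match t with
  | O => fun _ => 0
  | S t' => fun b' => supF P (Vtilde P t') b'
  end.

(* trajectories: t : n.-tuple (A * B) lists (a_0,b_0),...,(a_{n-1},b_{n-1});
   bprev b0 t i = b_{i-1} (with b_{-1} = b0). *)
Definition bprev (A B : finType) (n : nat) (bm1 : B) (t : n.-tuple (A * B)) (i : nat) : B :=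
  match i with
  | O => bm1
  | S k => nth bm1 (map snd t) k
  end.

(* E^{pi}_mu [ sum_{i=0}^{n-1} log P(B_i|B_{i-1},A_i) / P^pi(B_i|B_{i-1}) ],
   as an explicit sum over all trajectories weighted by their joint probability *)
Definition Epayoff (A B : finType) (P : B -> B -> A -> R) (mu : B -> R)
    (pi : B -> A -> R) (n : nat) : R :=
  \rsum_(bm1 : B) \rsum_(t : n.-tuple (A * B))
    (mu bm1
     * (\rprod_(i < n) (pi (bprev bm1 t i) (tnth t i).1
                        * P (tnth t i).2 (bprev bm1 t i) (tnth t i).1))
     * (\rsum_(i < n) log2 (P (tnth t i).2 (bprev bm1 t i) (tnth t i).1
                             / Pout P (pi (bprev bm1 t i)) (tnth t i).2 (bprev bm1 t i)))).

Definition C_FB_UMCO (A B : finType) (P : B -> B -> A -> R) (mu : B -> R) : R :=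
  Rliminf (fun n => / INR n *
    Rsup (fun x => exists pi : B -> A -> R, is_policy pi /\ x = Epayoff P mu pi n)).

(* Main.v *)
Require Import Defs.
From Stdlib Require Import Reals Lra ClassicalEpsilon.
From HB Require Import structures.
From mathcomp Require Import all_boot.
Local Open Scope R_scope.

Lemma RplusA : associative Rplus. Proof. move=> *; ring. Qed.
Lemma RmultA : associative Rmult. Proof. move=> *; ring. Qed.
HB.instance Definition _ := Monoid.isComLaw.Build R R0 Rplus RplusA Rplus_comm Rplus_0_l.
HB.instance Definition _ := Monoid.isComLaw.Build R R1 Rmult RmultA Rmult_comm Rmult_1_l.
HB.instance Definition _ := Monoid.isMulLaw.Build R R0 Rmult Rmult_0_l Rmult_0_r.
HB.instance Definition _ := Monoid.isAddLaw.Build R Rmult Rplus Rmult_plus_distr_r Rmult_plus_distr_l.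

Lemma sum_le (I : finType) (F G : I -> R) :
  (forall i, F i <= G i) -> \rsum_(i : I) F i <= \rsum_(i : I) G i.
Proof. move=> H; apply: (big_ind2 (fun x y => x <= y)) => //; [lra| move=> *; lra]. Qed.

Lemma sum_ge0 (I : finType) (F : I -> R) :
  (forall i, 0 <= F i) -> 0 <= \rsum_(i : I) F i.
Proof. move=> H; apply: (big_ind (fun x => 0 <= x)) => //; [lra| move=> *; lra]. Qed.

Lemma sum_term (I : finType) (F : I -> R) j :
  (forall i, 0 <= F i) -> F j <= \rsum_(i : I) F i.
Proof.
move=> H; rewrite (bigD1 j) //=.
have : 0 <= \big[Rplus/R0]_(i | i != j) F i.
  by apply: (big_ind (fun x => 0 <= x)) => //; [lra| move=> *; lra].
lra.
Qed.

Lemma sum_mull (I : finType) (F : I -> R) c :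
  \rsum_(i : I) (c * F i) = c * \rsum_(i : I) F i.
Proof. by rewrite big_distrr. Qed.

Lemma sum_mulr (I : finType) (F : I -> R) c :
  \rsum_(i : I) (F i * c) = (\rsum_(i : I) F i) * c.
Proof. by rewrite -big_distrl. Qed.

Lemma sum_add (I : finType) (F G : I -> R) :
  \rsum_(i : I) (F i + G i) = \rsum_(i : I) F i + \rsum_(i : I) G i.
Proof. by rewrite big_split. Qed.

Lemma Rsup_spec E : (exists x, E x) -> bound E -> is_lub E (Rsup E).
Proof.
move=> ne bd; rewrite /Rsup; apply: epsilon_spec.
by case: (completeness E bd ne) => m Hm; exists m.
Qed.

Lemma ln2_pos : 0 < ln 2.
Proof. have := ln_lt_2; have : 0 < / 2 by apply: Rinv_0_lt_compat; lra. lra. Qed.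

Lemma ln_le_x x : 0 < x -> ln x <= x.
Proof. move=> Hx; have := exp_ineq1_le (ln x); rewrite exp_ln //; lra. Qed.

Section Fops.
Variables (A B : finType) (P : B -> B -> A -> R).
Hypothesis HP : is_channel P.

Lemma Pout_ge p b0 b a : is_distr p -> P b0 b a * p a <= Pout P p b0 b.
Proof.
case=> p0 _; rewrite /Pout; apply: (@sum_term _ (fun a => P b0 b a * p a)).
move=> i; apply: Rmult_le_pos => //; case: (HP b i) => H _; exact: H.
Qed.

Lemma logterm_le p b0 b a : is_distr p ->
  log2 (P b0 b a / Pout P p b0 b) * P b0 b a * p a <= P b0 b a / ln 2.
Proof.
move=> Hp; have Hge := Pout_ge p b0 b a Hp.
have P0 : 0 <= P b0 b a by case: (HP b a) => H _; exact: H.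
have p0 : 0 <= p a by case: Hp => H _; exact: H.
have l2 := ln2_pos.
have rhs0 : 0 <= P b0 b a / ln 2.
  by apply: Rmult_le_pos => //; apply: Rlt_le; apply: Rinv_0_lt_compat.
case: (Req_dec (P b0 b a * p a) 0) => Hz.
  by rewrite Rmult_assoc Hz Rmult_0_r.
have Ppos : 0 < P b0 b a.
  by case: P0 => // H; rewrite -H Rmult_0_l in Hz.
have ppos : 0 < p a by case: p0 => // H; rewrite -H Rmult_0_r in Hz.
have Opos : 0 < Pout P p b0 b.
  by apply: (Rlt_le_trans _ _ _ _ Hge); apply: Rmult_lt_0_compat.
set O := Pout P p b0 b in Hge Opos *.
have xpos : 0 < P b0 b a / O by apply: Rmult_lt_0_compat => //; apply: Rinv_0_lt_compat.
have hl := @ln_le_x _ xpos.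
rewrite /log2 /Rdiv.
have -> : ln (P b0 b a * / O) * / ln 2 * P b0 b a * p a =
   (ln (P b0 b a * / O) * (P b0 b a * p a)) * / ln 2 by ring.
apply: Rmult_le_compat_r; first by apply: Rlt_le; apply: Rinv_0_lt_compat.
apply: (Rle_trans _ ((P b0 b a * / O) * (P b0 b a * p a))).
  by apply: Rmult_le_compat_r => //; apply: Rmult_le_pos.
have -> : P b0 b a * / O * (P b0 b a * p a) = P b0 b a * ((P b0 b a * p a) / O) by field; lra.
apply: (Rle_trans _ (P b0 b a * 1)); last lra. apply: Rmult_le_compat_l => //.
apply: (Rmult_le_reg_r O) => //; rewrite /Rdiv Rmult_assoc Rinv_l; lra.
Qed.

Lemma sumP b a : \rsum_(b0 : B) P b0 b a = 1.
Proof. by case: (HP b a). Qed.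

Lemma Fop_shift W k b p : is_distr p ->
  Fop P (fun x => W x + k) b p = Fop P W b p + k.
Proof.
case=> _ p1; rewrite /Fop.
have -> : \rsum_(a0 : A) ((\rsum_(b0 : B) log2 (P b0 b a0 / Pout P p b0 b) * P b0 b a0 +
         \rsum_(b0 : B) (W b0 + k) * P b0 b a0) * p a0)
   = \rsum_(a0 : A) (((\rsum_(b0 : B) log2 (P b0 b a0 / Pout P p b0 b) * P b0 b a0 +
         \rsum_(b0 : B) W b0 * P b0 b a0) * p a0) + k * p a0).
  apply: eq_bigr => a0 _.
  have -> : \rsum_(b0 : B) (W b0 + k) * P b0 b a0 =
      \rsum_(b0 : B) W b0 * P b0 b a0 + k * \rsum_(b0 : B) P b0 b a0.
    rewrite -sum_mull -sum_add; apply: eq_bigr => *; ring.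
  rewrite sumP; ring.
by rewrite sum_add sum_mull p1 Rmult_1_r.
Qed.

Lemma Fop_mono W1 W2 b p : is_distr p -> (forall x, W1 x <= W2 x) ->
  Fop P W1 b p <= Fop P W2 b p.
Proof.
case=> p0 _ HW; rewrite /Fop; apply: sum_le => a0.
apply: Rmult_le_compat_r => //; apply: Rplus_le_compat_l; apply: sum_le => b0.
apply: Rmult_le_compat_r => //; by case: (HP b a0) => H _; exact: H.
Qed.

Lemma Fop_bound W M b p : is_distr p -> (forall x, W x <= M) ->
  Fop P W b p <= \rsum_(a : A) (/ ln 2) + M.
Proof.
move=> Hp HW; have Hp' := Hp; case: Hp' => p0 p1.
apply: (Rle_trans _ (Fop P (fun _ => 0 + M) b p)); first by apply: Fop_mono => // x; have := HW x; lra.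
rewrite Fop_shift //; apply: Rplus_le_compat_r.
rewrite /Fop; apply: sum_le => a0.
have -> : \rsum_(b0 : B) 0 * P b0 b a0 = 0 by apply: big1 => *; ring.
rewrite Rplus_0_r.
have Hpa : p a0 <= 1 by rewrite -p1; apply: (@sum_term _ p).
have H1 : forall b0, log2 (P b0 b a0 / Pout P p b0 b) * P b0 b a0 * p a0 <= P b0 b a0 / ln 2.
  by move=> b0; apply: logterm_le.
have H2 := @sum_le _ _ _ H1.
have E1 : \rsum_(b0 : B) (log2 (P b0 b a0 / Pout P p b0 b) * P b0 b a0 * p a0) =
  (\rsum_(b0 : B) log2 (P b0 b a0 / Pout P p b0 b) * P b0 b a0) * p a0 by apply: sum_mulr.
have E2 : \rsum_(b0 : B) (P b0 b a0 / ln 2) = / ln 2.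
  by rewrite /Rdiv sum_mulr sumP Rmult_1_l.
rewrite E1 E2 in H2; exact: H2.
Qed.

End Fops.
Arguments Fop_shift {A B P} HP W k b p.
Arguments Fop_mono {A B P} HP W1 W2 b p.

Lemma tuple_split (T : finType) n (F : n.+1.-tuple T -> R) :
  \rsum_(t : n.+1.-tuple T) F t = \rsum_(x : T) \rsum_(t : n.-tuple T) F [tuple of x :: t].
Proof.
rewrite pair_bigA (reindex (fun p : T * n.-tuple T => [tuple of p.1 :: p.2])) //.
exists (fun t => (thead t, [tuple of behead t])).
  by move=> [x t] _ /=; congr pair; apply: val_inj.
by move=> t _; rewrite /= -tuple_eta.
Qed.

Section Traj.
Variables (A B : finType) (P : B -> B -> A -> R).

Lemma bprev_cons n bm1 (x : A * B) (t : n.-tuple (A * B)) (i : 'I_n) :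
  bprev bm1 [tuple of x :: t] (lift ord0 i) = bprev x.2 t i.
Proof.
case: i => [[|k] Hk] //=.
by apply: set_nth_default; rewrite size_map size_tuple; apply: ltnW.
Qed.

Definition prodw (pi : B -> A -> R) {n} b (t : n.-tuple (A * B)) :=
  \rprod_(i < n) (pi (bprev b t i) (tnth t i).1 * P (tnth t i).2 (bprev b t i) (tnth t i).1).
Definition sumlog (pi : B -> A -> R) {n} b (t : n.-tuple (A * B)) :=
  \rsum_(i < n) log2 (P (tnth t i).2 (bprev b t i) (tnth t i).1
                             / Pout P (pi (bprev b t i)) (tnth t i).2 (bprev b t i)).
Definition Qw pi n b := \rsum_(t : n.-tuple (A * B)) prodw pi b t.
Definition Ww pi n b := \rsum_(t : n.-tuple (A * B)) (prodw pi b t * sumlog pi b t).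

Lemma prodw_cons pi n b x (t : n.-tuple (A * B)) :
  prodw pi b [tuple of x :: t] = (pi b x.1 * P x.2 b x.1) * prodw pi x.2 t.
Proof.
rewrite /prodw big_ord_recl; congr Rmult.
by apply: eq_bigr => i _; rewrite bprev_cons tnthS.
Qed.

Lemma sumlog_cons pi n b x (t : n.-tuple (A * B)) :
  sumlog pi b [tuple of x :: t] =
  log2 (P x.2 b x.1 / Pout P (pi b) x.2 b) + sumlog pi x.2 t.
Proof.
rewrite /sumlog big_ord_recl; congr Rplus.
by apply: eq_bigr => i _; rewrite bprev_cons tnthS.
Qed.


Lemma sum_tuple0 (T : finType) (F : 0.-tuple T -> R) :
  \rsum_(t : 0.-tuple T) F t = F [tuple].
Proof. by apply: big_pred1 => t /=; symmetry; apply/eqP; apply: tuple0. Qed.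

Lemma sum_pair (F : A -> B -> R) :
  \rsum_(x : A * B) F x.1 x.2 = \rsum_(a : A) \rsum_(b0 : B) F a b0.
Proof. by rewrite pair_bigA. Qed.

Hypothesis HP : is_channel P.

Lemma Qw1 pi : is_policy pi -> forall n b, Qw pi n b = 1.
Proof.
move=> Hpi; elim=> [|n IH] b.
  by rewrite /Qw sum_tuple0 /prodw big_ord0.
rewrite /Qw tuple_split.
have -> : \rsum_(x : A * B) \rsum_(t : n.-tuple (A * B)) prodw pi b [tuple of x :: t]
   = \rsum_(x : A * B) (pi b x.1 * P x.2 b x.1).
  apply: eq_bigr => x _.
  have -> : \rsum_(t : n.-tuple (A * B)) prodw pi b [tuple of x :: t] =
     (pi b x.1 * P x.2 b x.1) * Qw pi n x.2.
    by rewrite /Qw -sum_mull; apply: eq_bigr => t _; rewrite prodw_cons.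
  by rewrite IH Rmult_1_r.
rewrite (sum_pair (fun a b0 => pi b a * P b0 b a)).
case: (Hpi b) => _ <-; apply: eq_bigr => a _.
by rewrite sum_mull sumP // Rmult_1_r.
Qed.

Lemma Ww0 pi b : Ww pi 0 b = 0.
Proof. by rewrite /Ww sum_tuple0 /sumlog big_ord0 Rmult_0_r. Qed.

Lemma WwS pi : is_policy pi -> forall n b, Ww pi n.+1 b = Fop P (Ww pi n) b (pi b).
Proof.
move=> Hpi n b; rewrite {1}/Ww tuple_split.
have -> : \rsum_(x : A * B) \rsum_(t : n.-tuple (A * B))
      (prodw pi b [tuple of x :: t] * sumlog pi b [tuple of x :: t])
   = \rsum_(x : A * B) ((log2 (P x.2 b x.1 / Pout P (pi b) x.2 b) + Ww pi n x.2)
        * P x.2 b x.1 * pi b x.1).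
  apply: eq_bigr => x _.
  set L := log2 (P x.2 b x.1 / Pout P (pi b) x.2 b).
  set c := pi b x.1 * P x.2 b x.1.
  transitivity (\rsum_(t : n.-tuple (A * B))
     (c * (L * prodw pi x.2 t + prodw pi x.2 t * sumlog pi x.2 t))).
    by apply: eq_bigr => t _; rewrite prodw_cons sumlog_cons /c /L; ring.
  rewrite (@sum_mull _ (fun t : n.-tuple (A * B) => L * prodw pi x.2 t + prodw pi x.2 t * sumlog pi x.2 t)).
  rewrite (@sum_add _ (fun t : n.-tuple (A * B) => L * prodw pi x.2 t)).
  rewrite (@sum_mull _ (fun t : n.-tuple (A * B) => prodw pi x.2 t)).
  have := @Qw1 pi Hpi n x.2; rewrite /Qw => ->.
  rewrite -/(Ww pi n x.2) /c; ring.
rewrite (sum_pair (fun a b0 => (log2 (P b0 b a / Pout P (pi b) b0 b) + Ww pi n b0)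
        * P b0 b a * pi b a)).
rewrite /Fop; apply: eq_bigr => a _.
rewrite -sum_add -sum_mulr; apply: eq_bigr => b0 _; ring.
Qed.

End Traj.
Arguments Ww {A B} P pi n b.
Arguments Qw {A B} P pi n b.
Arguments prodw {A B}.
Arguments sumlog {A B}.
Arguments Ww0 {A B P} pi b.
Arguments WwS {A B P} HP pi Hpi n b.

Lemma INR_leq (m n : nat) : (m <= n)%N -> INR m <= INR n.
Proof. by move/leP; apply: le_INR. Qed.

Lemma small_tail K eps : 0 <= K -> 0 < eps ->
  exists N : nat, (0 < N)%N /\ forall k : nat, (N <= k)%N -> K / INR k < eps.
Proof.
move=> K0 e0.
have e1 : 0 < eps / (K + 1) by apply: Rdiv_lt_0_compat; lra.
case: (archimed_cor1 _ e1) => N [HN N0].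
have N0' : (0 < N)%N by apply/ltP.
exists N; split => // k Hk.
have kN := @INR_leq _ _ Hk.
have Npos : 0 < INR N by apply: lt_0_INR; apply/ltP.
have kpos : 0 < INR k by lra.
have : / INR k <= / INR N by apply: Rinv_le_contravar.
move=> Hinv.
have H1 : K * / INR k <= K * (eps / (K + 1)).
  apply: Rmult_le_compat_l => //; lra.
have H2 : K * (eps / (K + 1)) < eps.
  have -> : K * (eps / (K + 1)) = eps * (K / (K + 1)) by field; lra.
  have : K / (K + 1) < 1 by apply: (Rmult_lt_reg_r (K + 1)); [lra|]; field_simplify; lra.
  move=> h; nra.
rewrite /Rdiv; lra.
Qed.

Lemma lub_eq E l : (exists x, E x) -> is_lub E l -> Rsup E = l.
Proof.
move=> ne H; apply: (is_lub_u E) => //; apply: Rsup_spec => //.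
by exists l; case: H.
Qed.

Lemma div_mono K a b : 0 <= K -> 0 < a -> a <= b -> K / b <= K / a.
Proof.
move=> K0 a0 ab; rewrite /Rdiv; apply: Rmult_le_compat_l => //.
by apply: Rinv_le_contravar.
Qed.

Lemma liminf_lim (u : nat -> R) J K : 0 <= K ->
  (forall n, (0 < n)%N -> J - K / INR n <= u n /\ u n <= J + K / INR n) ->
  Rliminf u = J.
Proof.
move=> K0 Hu.
set M0 := Rabs (u 0%N) + Rabs J + K.
have ulow : forall k, - M0 <= u k.
  case=> [|k]; first by have := Rabs_pos J; have := Rle_abs (- u 0%N); rewrite Rabs_Ropp; rewrite /M0; lra.
  have [h _] := Hu k.+1 isT.
  have : K / INR k.+1 <= K / 1 by apply: div_mono => //; [lra| apply: (@INR_leq 1)].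
  rewrite /Rdiv Rinv_1 Rmult_1_r => h2.
  have := Rle_abs (- J); rewrite Rabs_Ropp; have := Rabs_pos (u 0%N); rewrite /M0 /Rdiv in h *; lra.
pose En n := fun x => exists k, (n <= k)%N /\ - x = u k.
have lubn : forall n, is_lub (En n) (Rsup (En n)).
  move=> n; apply: Rsup_spec.
    by exists (- u n); exists n; split => //; rewrite Ropp_involutive.
  exists M0 => x [k [_ hk]]; have := ulow k; lra.
pose y n := Rinf (fun x => exists k, (n <= k)%N /\ x = u k).
have yE : forall n, y n = - Rsup (En n) by [].
have yi : forall n k, (n <= k)%N -> y n <= u k.
  move=> n k nk; rewrite yE; case: (lubn n) => ub _.
  have : - u k <= Rsup (En n) by apply: ub; exists k; split => //; rewrite Ropp_involutive.
  lra.
have yii : forall n, (0 < n)%N -> J - K / INR n <= y n.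
  move=> n n0; rewrite yE; case: (lubn n) => _ least.
  suff : Rsup (En n) <= - J + K / INR n by lra.
  apply: least => x [k [nk hk]].
  have k0 : (0 < k)%N by apply: leq_trans nk.
  have [h _] := Hu k k0.
  have : K / INR k <= K / INR n.
    apply: div_mono => //; [apply: lt_0_INR; apply/ltP => // | exact: INR_leq].
  lra.
have yiii : forall n, y n <= J.
  move=> n; apply: Rnot_lt_le => lt.
  have [N [N0 HN]] := @small_tail K _ K0 (Rlt_Rminus _ _ lt).
  have h1 : (N <= maxn N n)%N by apply: leq_maxl.
  have h2 : (n <= maxn N n)%N by apply: leq_maxr.
  have h3 := HN _ h1.
  have [_ h4] := Hu (maxn N n) (leq_trans N0 h1).
  have h5 := yi _ _ h2.
  lra.
rewrite /Rliminf; apply: lub_eq.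
  by exists (y 0%N); exists 0%N.
split.
  by move=> x [n ->]; apply: yiii.
move=> b ub; apply: Rnot_lt_le => lt.
have [N [N0 HN]] := @small_tail K _ K0 (Rlt_Rminus _ _ lt).
have h1 := HN N (leqnn N).
have h2 := yii N N0.
have : y N <= b by apply: ub; exists N.
lra.
Qed.

Theorem mainTheorem6 (A B : finType) (P : B -> B -> A -> R)
  (HP : is_channel P) (V : B -> R) (J : R)
  (Hlim : forall b : B, Un_cv (fun t => Vtilde P t b - INR t * J) (V b))
  (Hbell : exists pistar : B -> A -> R, is_policy pistar /\
      forall b : B, J + V b = supF P V b /\ J + V b = Fop P V b (pistar b)) :
  forall mu : B -> R, is_distr mu -> J = C_FB_UMCO P mu.
Proof.
move=> mu [mu0 mu1]; case: Hbell => ps [Hps Hb].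
pose c := \rsum_(b : B) Rabs (V b).
have Vle : forall b, Rabs (V b) <= c.
  by move=> b; apply: (@sum_term _ (fun b => Rabs (V b))) => i; apply: Rabs_pos.
have c0 : 0 <= c by apply: sum_ge0 => i; apply: Rabs_pos.
have Fle : forall b p, is_distr p -> Fop P V b p <= J + V b.
  move=> b p Hp.
  have lub : is_lub (fun x => exists p, is_distr p /\ x = Fop P V b p) (supF P V b).
    apply: Rsup_spec.
      by exists (Fop P V b (ps b)); exists (ps b); split => //; apply: Hps.
    exists (\rsum_(a : A) (/ ln 2) + c) => x [q [Hq ->]].
    apply: (@Fop_bound _ _ P HP V c b q Hq) => y; have := Vle y; have := Rle_abs (V y); lra.
  case: lub => ub _; rewrite (proj1 (Hb b)); apply: ub; by exists p.
have Upper : forall pi, is_policy pi -> forall n b, Ww P pi n b <= INR n * J + V b + c.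
  move=> pi Hpi; elim=> [|n IH] b.
    rewrite Ww0 /=; have := Vle b; have := Rle_abs (- V b); rewrite Rabs_Ropp; lra.
  rewrite (WwS HP pi Hpi) S_INR.
  apply: (Rle_trans _ (Fop P (fun x => V x + (INR n * J + c)) b (pi b))).
    by apply: (Fop_mono HP) => // x; have := IH x; lra.
  rewrite (Fop_shift HP) //; have := Fle b (pi b) (Hpi b); lra.
have Lower : forall n b, INR n * J + V b - c <= Ww P ps n b.
  elim=> [|n IH] b.
    rewrite Ww0 /=; have := Vle b; have := Rle_abs (V b); lra.
  rewrite (WwS HP ps Hps) S_INR.
  apply: (Rle_trans _ (Fop P (fun x => V x + (INR n * J - c)) b (ps b))); last first.
    by apply: (Fop_mono HP) => // x; have := IH x; lra.
  rewrite (Fop_shift HP) //; rewrite -(proj2 (Hb b)); lra.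
have Epay : forall pi n, Epayoff P mu pi n = \rsum_(b : B) (mu b * Ww P pi n b).
  move=> pi n; rewrite /Epayoff; apply: eq_bigr => b _.
  rewrite /Ww -sum_mull; apply: eq_bigr => t _; rewrite /prodw /sumlog; ring.
have Eup : forall pi n, is_policy pi -> Epayoff P mu pi n <= INR n * J + 2 * c.
  move=> pi n Hpi; rewrite Epay.
  apply: (Rle_trans _ (\rsum_(b : B) (mu b * (INR n * J + 2 * c)))).
    apply: sum_le => b; apply: Rmult_le_compat_l => //.
    have := Upper pi Hpi n b; have := Vle b; have := Rle_abs (V b); lra.
  by rewrite sum_mulr mu1 Rmult_1_l; lra.
have Elo : forall n, INR n * J - 2 * c <= Epayoff P mu ps n.
  move=> n; rewrite Epay.
  apply: (Rle_trans _ (\rsum_(b : B) (mu b * (INR n * J - 2 * c)))).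
    by rewrite sum_mulr mu1 Rmult_1_l; lra.
  apply: sum_le => b; apply: Rmult_le_compat_l => //.
  have := Lower n b; have := Vle b; have := Rle_abs (- V b); rewrite Rabs_Ropp; lra.
have Sb : forall n, INR n * J - 2 * c <=
     Rsup (fun x => exists pi, is_policy pi /\ x = Epayoff P mu pi n) <= INR n * J + 2 * c.
  move=> n.
  have [ub least] : is_lub (fun x => exists pi, is_policy pi /\ x = Epayoff P mu pi n)
     (Rsup (fun x => exists pi, is_policy pi /\ x = Epayoff P mu pi n)).
    apply: Rsup_spec; first by exists (Epayoff P mu ps n); exists ps.
    by exists (INR n * J + 2 * c) => x [pi [Hpi ->]]; apply: Eup.
  split.
    apply: (Rle_trans _ (Epayoff P mu ps n)) => //; apply: ub; by exists ps.
  by apply: least => x [pi [Hpi ->]]; apply: Eup.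
symmetry; rewrite /C_FB_UMCO; apply: (@liminf_lim _ J (2 * c)); first lra.
move=> n n0; have np : 0 < INR n by apply: lt_0_INR; apply/ltP.
have [h1 h2] := Sb n.
set S := Rsup _ in h1 h2 *.
have e1 : / INR n * (INR n * J - 2 * c) = J - 2 * c / INR n by field; lra.
have e2 : / INR n * (INR n * J + 2 * c) = J + 2 * c / INR n by field; lra.
have ip : 0 <= / INR n by apply: Rlt_le; apply: Rinv_0_lt_compat.
split.
  by rewrite -e1; apply: Rmult_le_compat_l.
by rewrite -e2; apply: Rmult_le_compat_l.
Qed.
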